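(* Let $\mu,\tau$ be partitions of $s$. There is a bijection between the set of terminal vertices of the tree $\mathscr T(\mu)$ labelled by $(\tau,\tau)$ and the set $\mathrm{SStd}_s(\tau,\mu)$ of semistandard Young tableaux of shape $\tau$ and weight $\mu$.
   Context: A pair of partitions for $s$ is $(\tau^\sharp,\tau)$ with $\tau$ a composition of $s$ and $\tau^\sharp$ a partition with $\tau^\sharp_c\le\tau_c$ for all $c$. For such a pair and $c>1$: $r^m_c(\tau)$ is the composition obtained from $\tau$ by moving the last $m$ boxes of row $c$ to the end of row $c-1$; $a_c(\tau^\sharp)$ is obtained by adding one box at the end of row $c$ of $\tau^\sharp$ if the result is a partition, and otherwise the pair $(a_c(\tau^\sharp),\tau)$ is replaced by the symbol $(\varnothing,\varnothing)$. The rooted tree $\mathscr T(\mu)$ (for $\mu\vdash s$) has vertices labelled by pairs of partitions; labels $(\tau^\sharp,\tau)$ and $(\eta^\sharp,\tau)$ with $\tau^\sharp,\eta^\sharp$ differing only in the first row are identified, and one writes labels with $\tau^\sharp_1=\tau_1$. The root is labelled $((\mu_1),\mu)$. For a vertex labelled $(\tau^\sharp,\tau)\neq(\varnothing,\varnothing)$, if there is a minimal $1<c\le\ell(\mu)$ with $\tau^\sharp_c<\tau_c$ then the vertex has exactly two children, labelled $(\tau^\sharp,r^{\tau_c-\tau^\sharp_c}_c(\tau))$ and $(a_c(\tau^\sharp),\tau)$; otherwise ($\tau^\sharp=\tau$) the vertex is terminal. Vertices labelled $(\varnothing,\varnothing)$ are also leaves but are not counted as terminal vertices. A semistandard Young tableau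 of shape $\tau$ and weight $\mu$ is a filling of the Young diagram of $\tau$ with $\mu_1$ ones, $\mu_2$ twos, etc., weakly increasing along rows and strictly increasing down columns. *)

(* Defs.v *)
From mathcomp Require Import all_boot.
Set Implicit Arguments. Unset Strict Implicit. Unset Printing Implicit Defensive.

(* Sequences of naturals are read through [nth 0], so rows beyond the end are 0.
   Row indices are 0-based: paper row c corresponds to index c.-1. *)

Definition partition_of (s : nat) (l : seq nat) : bool :=
  [&& sorted geq l, all (fun x => 0 < x) l & sumn l == s].

(* partition possibly padded with trailing zeros (used for tau^sharp) *)
Definition is_partition0 (l : seq nat) : bool := sorted geq l.

(* labels of vertices of T(mu): a pair (tau^sharp, tau) or the symbol (empty,empty).
   All sequences are kept of length l(mu). *)
Inductive vlabel := Lab of seq nat & seq nat | EmptyLab.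

(* identification convention: write labels with tau^sharp_1 = tau_1 *)
Definition normalize (ts t : seq nat) : seq nat := set_nth 0 ts 0 (nth 0 t 0).

Definition rmove (c m : nat) (t : seq nat) : seq nat :=
  set_nth 0 (set_nth 0 t c (nth 0 t c - m)) c.-1 (nth 0 t c.-1 + m).

(* minimal 1 < c <= l(mu) (paper numbering) with tau^sharp_c < tau_c,
   returned as a 0-based index *)
Definition first_bad (L : nat) (ts t : seq nat) : option nat :=
  ohead [seq c <- iota 1 L.-1 | nth 0 ts c < nth 0 t c].

(* the two children: false = (ts, r^{t_c - ts_c}_c t), true = (a_c ts, t) *)
Definition child (b : bool) (c : nat) (ts t : seq nat) : vlabel :=
  if b then
    let ts' := incr_nth ts c in
    if is_partition0 ts' then Lab ts' t else EmptyLab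
  else
    let t' := rmove c (nth 0 t c - nth 0 ts c) t in
    Lab (normalize ts t') t'.

(* vertices of the tree are addressed by paths (seq bool) from the root;
   [follow L v p] is the label of the vertex reached along p from a vertex
   labelled v, or None if there is no such vertex *)
Fixpoint follow (L : nat) (v : vlabel) (p : seq bool) : option vlabel :=
  match p with
  | [::] => Some v
  | b :: p' =>
    match v with
    | EmptyLab => None
    | Lab ts t =>
      match first_bad L ts t with
      | None => None
      | Some c => follow L (child b c ts t) p'
      end
    end
  end.

Definition root_label (mu : seq nat) : vlabel :=
  Lab (nth 0 mu 0 :: nseq (size mu).-1 0) mu.

Definition vertex_label (mu : seq nat) (p : seq bool) : option vlabel :=
  follow (size mu) (root_label mu) p.

Definition eq_comp (a b : seq nat) : bool :=
  all (fun i => nth 0 a i == nth 0 b i) (iota 0 (maxn (size a) (size b))).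

Definition terminal_tt (mu tau : seq nat) (p : seq bool) : bool :=
  match vertex_label mu p with
  | Some (Lab ts t) =>
      (first_bad (size mu) ts t == None) && eq_comp ts tau && eq_comp t tau
  | _ => false
  end.

Definition is_ssyt (tau mu : seq nat) (T : seq (seq nat)) : bool :=
  [&& map size T == tau,
      all (sorted leq) T,
      all (fun i => all (fun j => nth 0 (nth [::] T i) j < nth 0 (nth [::] T i.+1) j)
                        (iota 0 (size (nth [::] T i.+1))))
          (iota 0 (size T)) &
      all (fun x => count_mem x (flatten T) == (if x is k.+1 then nth 0 mu k else 0))
          (iota 0 (sumn mu).+1 ++ flatten T)].

Definition terminal_vertex (mu tau : seq nat) := {p : seq bool | terminal_tt mu tau p}.
Definition SStd (tau mu : seq nat) := {T : seq (seq nat) | is_ssyt tau mu T}.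

(* Main.v *)
Require Import Defs.
From mathcomp Require Import all_boot zify.
Set Implicit Arguments. Unset Strict Implicit. Unset Printing Implicit Defensive.

Definition Eqb (X Y : Type) (P : pred X) (Q : pred Y) :=
  exists (f : X -> Y) (g : Y -> X),
    [/\ forall x, P x -> Q (f x), forall y, Q y -> P (g y),
        forall x, P x -> g (f x) = x & forall y, Q y -> f (g y) = y].

Lemma Eqb_sym X Y (P : pred X) (Q : pred Y) : Eqb P Q -> Eqb Q P.
Proof. by move=> [f [g [H1 H2 H3 H4]]]; exists g, f. Qed.

Lemma Eqb_trans X Y Z (P : pred X) (Q : pred Y) (R : pred Z) :
  Eqb P Q -> Eqb Q R -> Eqb P R.
Proof.
move=> [f [g [H1 H2 H3 H4]]] [f' [g' [H1' H2' H3' H4']]].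
exists (f' \o f), (g \o g'); split => /=.
- by move=> x Px; apply/H1'/H1.
- by move=> y Py; apply/H2/H2'.
- by move=> x Px; rewrite H3' ?H3 //; apply: H1.
- by move=> y Py; rewrite H4 ?H4' //; apply: H2'.
Qed.

Lemma Eqb_ext X Y (P P' : pred X) (Q Q' : pred Y) :
  P =1 P' -> Q =1 Q' -> Eqb P Q -> Eqb P' Q'.
Proof.
move=> eP eQ [f [g [H1 H2 H3 H4]]]; exists f, g; split.
- by move=> x; rewrite -eP -eQ; apply: H1.
- by move=> y; rewrite -eP -eQ; apply: H2.
- by move=> x; rewrite -eP; apply: H3.
- by move=> y; rewrite -eQ; apply: H4.
Qed.

Lemma Eqb_pred0' X Y (x0 : X) (y0 : Y) (P : pred X) (Q : pred Y) :
  P =1 pred0 -> Q =1 pred0 -> Eqb P Q.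
Proof. by move=> eP eQ; exists (fun _ => y0), (fun _ => x0); split => x; rewrite ?eP ?eQ. Qed.

Lemma Eqb_single (X Y : eqType) (a : X) (c : Y) (b : bool) :
  Eqb (fun x => (x == a) && b) (fun y => (y == c) && b).
Proof.
exists (fun _ => c), (fun _ => a); split.
- by move=> x /andP[_ ->]; rewrite eqxx.
- by move=> y /andP[_ ->]; rewrite eqxx.
- by move=> x /andP[/eqP -> _].
- by move=> y /andP[/eqP -> _].
Qed.

Lemma Eqb_cons X (Y : eqType) (P : pred X) (Q : pred (seq Y)) (k : Y) :
  Eqb P Q -> Eqb P (fun L => if L is a :: L' then (a == k) && Q L' else false).
Proof.
move=> [f [g [H1 H2 H3 H4]]].
exists (fun x => k :: f x), (fun y => g (behead y)); split.
- by move=> x Px; rewrite eqxx H1.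
- by case=> // a L' /andP[_ QL]; apply: H2.
- by move=> x Px /=; rewrite H3.
- by case=> // a L' /andP[/eqP -> QL] /=; rewrite H4.
Qed.

Lemma Eqb_split Y (P P1 P2 : pred (seq bool)) (Q Q1 Q2 : pred Y) :
  P [::] = false -> (forall p, P (true :: p) = P1 p) -> (forall p, P (false :: p) = P2 p) ->
  (forall y, Q y = Q1 y || Q2 y) -> (forall y, Q1 y -> Q2 y -> False) ->
  Eqb P1 Q1 -> Eqb P2 Q2 -> Eqb P Q.
Proof.
move=> P0 Pt Pf eQ dis [f1 [g1 [A1 A2 A3 A4]]] [f2 [g2 [B1 B2 B3 B4]]].
exists (fun p => match p with true :: p' => f1 p' | false :: p' => f2 p' | [::] => f1 [::] end).
exists (fun y => if Q1 y then true :: g1 y else false :: g2 y); split.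
- by case=> [|[] p]; rewrite ?P0 ?Pt ?Pf // => H; rewrite eQ ?A1 ?B1 ?orbT.
- move=> y; rewrite eQ; case: ifP => [q1 _|q1 /= q2]; first by rewrite Pt A2.
  by rewrite Pf B2.
- case=> [|[] p]; rewrite ?P0 ?Pt ?Pf // => H; first by rewrite A1 // A3.
  case: ifP => [q1|_]; last by rewrite B3.
  by case: (dis _ q1 (B1 _ H)).
- move=> y; rewrite eQ; case: ifP => [q1 _|q1 /= q2]; first by rewrite A4.
  by rewrite B4.
Qed.

Lemma Eqb_sig X Y (P : pred X) (Q : pred Y) :
  Eqb P Q -> exists f : {x | P x} -> {y | Q y}, bijective f.
Proof.
move=> [f [g [H1 H2 H3 H4]]].
exists (fun x => exist _ (f (sval x)) (H1 _ (svalP x))).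
exists (fun y => exist _ (g (sval y)) (H2 _ (svalP y))).
- case=> x Px /=; move: (H2 _ _); rewrite H3 // => Px'.
  by rewrite (bool_irrelevance Px' Px).
- case=> y Qy /=; move: (H1 _ _); rewrite H4 // => Qy'.
  by rewrite (bool_irrelevance Qy' Qy).
Qed.

Lemma sumn_set_nthS (s : seq nat) i x : i < size s ->
  sumn (set_nth 0 s i x) + nth 0 s i = sumn s + x.
Proof.
elim: s i => [|a s IH] [|i] //= Hi; first lia.
have := IH i Hi; lia.
Qed.

Lemma sumn_incr_nth (s : seq nat) i : i < size s -> sumn (incr_nth s i) = (sumn s).+1.
Proof. elim: s i => [|a s IH] [|i] //= Hi; rewrite ?IH //; lia. Qed.

Lemma sumn_le_eq (a b : seq nat) : size a = size b ->
  (forall j, j < size a -> nth 0 a j <= nth 0 b j) -> sumn a = sumn b -> a = b.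
Proof.
elim: a b => [|x a IH] [|y b] //= [Hs] Hle Hsum.
have h0 := Hle 0 isT; have hS : forall j, j < size a -> nth 0 a j <= nth 0 b j.
  by move=> j Hj; apply: (Hle j.+1).
have : sumn a <= sumn b.
  clear IH Hle Hsum h0; elim: a b Hs hS => [|x' a IH'] [|y' b] //= [Hs] H.
  have h1 := H 0 isT; have h2 := IH' b Hs (fun j Hj => H j.+1 Hj); simpl in h1; lia.
move=> hab; simpl in h0; have exy : x = y by lia.
by rewrite exy (IH b) //; lia.
Qed.

Lemma sorted_geqP (s : seq nat) :
  reflect (forall i, i.+1 < size s -> nth 0 s i.+1 <= nth 0 s i) (sorted geq s).
Proof. exact: (sortedP 0). Qed.

Lemma set_nth_id (s : seq nat) i : i < size s -> set_nth 0 s i (nth 0 s i) = s.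
Proof.
move=> Hi; apply: (eq_from_nth (x0:=0)); rewrite size_set_nth; first lia.
by move=> j _; rewrite nth_set_nth /=; case: eqP => // ->.
Qed.

Ltac ifs := repeat match goal with
  | |- context[if ?b then _ else _] =>
  (rewrite (_ : b = true); last lia) || (rewrite (_ : b = false); last lia)
  | |- context[?a == ?b] => match type of a with nat => idtac end;
  (rewrite (_ : (a == b) = true); last lia) || (rewrite (_ : (a == b) = false); last lia)
  end.

Ltac fin := ifs; rewrite /= ?mul0n ?mul1n ?muln0 ?addn0 ?add0n; try lia.

Section Tree.
Variables (mu tau : seq nat).
Local Notation L := (size mu).

Definition Term (S : vlabel) (p : seq bool) : bool :=
  match follow L S p with
  | Some (Lab ts t) => (first_bad L ts t == None) && Defs.eq_comp ts tau && Defs.eq_comp t tau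
  | _ => false
  end.

Definition midcond (k : seq nat) (r m : nat) (l : seq nat) : bool :=
  [&& size l == L,
      all (fun j => [&& (r < j) ==> (nth 0 l j == nth 0 k j),
                        (j <= r) ==> (nth 0 k j <= nth 0 l j) &
                        ((0 < j) && (j <= r)) ==> (nth 0 l j <= nth 0 k j.-1)]) (iota 0 L)
    & sumn l == sumn k + m].

Fixpoint GTrest (k : seq nat) (w : nat) (G : seq (seq nat)) : bool :=
  match G with
  | [::] => (w == L) && Defs.eq_comp k tau
  | l :: G' => [&& w < L, midcond k w (nth 0 mu w) l & GTrest l w.+1 G']
  end.

Definition MID (k : seq nat) (v r m : nat) (G : seq (seq nat)) : bool :=
  if G is l :: G' then midcond k r m l && GTrest l v.+1 G' else false.

Definition tv (k : seq nat) (v r m : nat) : seq nat :=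
  mkseq (fun j => if v < j then nth 0 mu j else nth 0 k j + (j == r) * m) L.

Definition Inv (k : seq nat) (v r m : nat) :=
  [/\ size k = L, sorted geq k, (forall j, v < j -> nth 0 k j = 0), v < L
    & r <= v /\ (0 < m -> 0 < r)].

Lemma midcondP k r m l :
  reflect [/\ size l = L,
     (forall j, j < L -> [/\ r < j -> nth 0 l j = nth 0 k j,
                           j <= r -> nth 0 k j <= nth 0 l j &
                           0 < j <= r -> nth 0 l j <= nth 0 k j.-1])
     & sumn l = sumn k + m] (midcond k r m l).
Proof.
apply: (iffP and3P) => [[/eqP Hs /allP Ha /eqP Hm]|[Hs Ha Hm]]; split => //; try by apply/eqP.
- move=> j Hj; have : j \in iota 0 L by rewrite mem_iota.
  move/Ha/and3P => [h1 h2 h3].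
  by split => [/(implyP h1)/eqP|/(implyP h2)|/(implyP h3)].
- apply/allP => j; rewrite mem_iota /= => Hj; have [h1 h2 h3] := Ha j Hj.
  apply/and3P; split; apply/implyP => //; first by move/h1 => ->.
Qed.

Lemma Term_cons ts t b p : Term (Lab ts t) (b :: p) =
  if first_bad L ts t is Some c then Term (child b c ts t) p else false.
Proof. by rewrite /Term /=; case: first_bad. Qed.

Lemma Term_nil ts t : Term (Lab ts t) [::] =
  (first_bad L ts t == None) && Defs.eq_comp ts tau && Defs.eq_comp t tau.
Proof. by []. Qed.

Lemma Term_empty p : Term EmptyLab p = false.
Proof. by case: p. Qed.

Lemma FB_some ts t r : 0 < r < L ->
  (forall c, 0 < c < r -> nth 0 t c <= nth 0 ts c) -> nth 0 ts r < nth 0 t r ->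
  first_bad L ts t = Some r.
Proof.
move=> /andP[r0 rL] Hlt Hr; rewrite /first_bad.
have -> : iota 1 L.-1 = iota 1 r.-1 ++ iota r (L - r).
  rewrite (_ : L.-1 = r.-1 + (L - r)); last lia.
  by rewrite iotaD (_ : 1 + r.-1 = r) //; lia.
rewrite filter_cat (eq_in_filter (a2 := pred0)) ?filter_pred0 /=.
  by case E: (L - r) => [|n]; [lia| rewrite /= Hr].
move=> c; rewrite mem_iota => Hc /=; apply/negbTE; rewrite -leqNgt; apply: Hlt; lia.
Qed.

Lemma FB_none ts t :
  (forall c, 0 < c < L -> nth 0 t c <= nth 0 ts c) -> first_bad L ts t = None.
Proof.
move=> H; rewrite /first_bad (eq_in_filter (a2 := pred0)) ?filter_pred0 //.
move=> c; rewrite mem_iota => Hc /=; apply/negbTE; rewrite -leqNgt; apply: H; lia.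
Qed.

Lemma nth_tv k v r m j : j < L ->
  nth 0 (tv k v r m) j = if v < j then nth 0 mu j else nth 0 k j + (j == r) * m.
Proof. by move=> Hj; rewrite nth_mkseq. Qed.

Lemma size_tv k v r m : size (tv k v r m) = L.
Proof. by rewrite size_mkseq. Qed.


Lemma tv_next k v r : v.+1 < L -> nth 0 k v.+1 = 0 ->
  tv k v r 0 = tv k v.+1 v.+1 (nth 0 mu v.+1).
Proof.
move=> hv hk; apply: eq_mkseq => j /=; rewrite muln0 addn0.
have [->|hne] := eqVneq j v.+1; first by ifs; rewrite ?eqxx hk ?mul1n.
have [hj|hj] := leqP j v; by ifs; rewrite ?(negbTE hne) ?mul0n ?addn0.
Qed.

Lemma tv_true k v r m : r <= v -> tv k v r m.+1 = tv (incr_nth k r) v r m.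
Proof.
move=> hr; apply: eq_mkseq => j /=; rewrite nth_incr_nth; case: ifP => // _.
have [->|hne] := eqVneq j r; first by rewrite ?eqxx /=; lia.
by [].
Qed.

Lemma child_true_lab k v r m : r <= v ->
  child true r k (tv k v r m.+1) =
  if sorted geq (incr_nth k r) then Lab (incr_nth k r) (tv (incr_nth k r) v r m)
  else EmptyLab.
Proof. by move=> hr; rewrite /child /is_partition0 tv_true. Qed.

Lemma child_false_lab1 k v r m : size k = L -> 0 < r -> r.+1 <= v -> v < L ->
  child false r.+1 k (tv k v r.+1 m) = Lab k (tv k v r m).
Proof.
move=> hs r0 hrv hv; rewrite /child.
have -> : nth 0 (tv k v r.+1 m) r.+1 - nth 0 k r.+1 = m.
  by rewrite nth_tv; [ifs; lia | lia].
have Et : rmove r.+1 m (tv k v r.+1 m) = tv k v r m.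
  apply: (eq_from_nth (x0:=0)); rewrite /rmove !size_set_nth !size_tv; first lia.
  move=> j Hj; rewrite !nth_set_nth /= !nth_set_nth /= !nth_tv //; try lia.
  rewrite ?(ltn_eqF (ltnSn _)) ?eqxx.
  have [->|hne] := eqVneq j r; first by ifs; lia.
  have [->|hne'] := eqVneq j r.+1; first by ifs; lia.
  by have [hj|hj] := leqP j v; ifs; rewrite ?(negbTE hne).
rewrite Et /normalize nth_tv; last lia.
by ifs; rewrite ?mul0n ?addn0 ?set_nth_id //; lia.
Qed.

Lemma child_false_lab0 k v m : size k = L -> 0 < v -> v < L ->
  child false 1 k (tv k v 1 m) =
  Lab (set_nth 0 k 0 (nth 0 k 0 + m)) (tv (set_nth 0 k 0 (nth 0 k 0 + m)) v 0 0).
Proof.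
move=> hs hv0 hv; rewrite /child.
have -> : nth 0 (tv k v 1 m) 1 - nth 0 k 1 = m.
  by rewrite nth_tv; [ifs; lia | lia].
have Et : rmove 1 m (tv k v 1 m) = tv (set_nth 0 k 0 (nth 0 k 0 + m)) v 0 0.
  apply: (eq_from_nth (x0:=0)); rewrite /rmove !size_set_nth !size_tv; first lia.
  move=> j Hj; rewrite !nth_set_nth /= !nth_set_nth /= !nth_tv // ?nth_set_nth /=; try lia.
  have [->|hne] := eqVneq j 0; first by fin.
  have [->|hne'] := eqVneq j 1; first by fin.
  by have [hj|hj] := leqP j v; fin.
by rewrite Et /normalize nth_tv; [fin; rewrite nth_set_nth | lia].
Qed.


Lemma sorted_pred (k : seq nat) j : sorted geq k -> 0 < j < size k -> nth 0 k j <= nth 0 k j.-1.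
Proof. by move=> ks hj; have := (sorted_geqP _ ks) j.-1; rewrite prednK; [apply; lia| lia]. Qed.

Lemma incr_sorted (k : seq nat) r : sorted geq k -> 0 < r < size k ->
  nth 0 k r < nth 0 k r.-1 -> sorted geq (incr_nth k r).
Proof.
move=> ks hr hlt; apply/sorted_geqP => i; rewrite size_incr_nth ifT; last lia.
move=> hi; rewrite !nth_incr_nth; have := (sorted_geqP _ ks) i hi.
have [e1|n1] := eqVneq r i.+1; first by subst r; simpl in hlt; lia.
lia.
Qed.

Lemma set0_sorted (k : seq nat) m : sorted geq k -> 0 < size k ->
  sorted geq (set_nth 0 k 0 (nth 0 k 0 + m)).
Proof.
move=> ks hk; apply/sorted_geqP => i; rewrite size_set_nth => hi.
rewrite !nth_set_nth /=; have := (sorted_geqP _ ks) i; case: i hi => [|i] hi /=; lia.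
Qed.

Lemma midcond0 k r l : sorted geq k -> size k = L -> r < L -> midcond k r 0 l = (l == k).
Proof.
move=> ks hs hr; apply/idP/eqP.
- case/midcondP => hl H hsum; symmetry; apply: sumn_le_eq; [lia| |lia].
  move=> j Hj; rewrite hs in Hj; have [h1 h2 _] := H j Hj.
  by have [hj|hj] := leqP j r; [apply: h2 | rewrite h1].
- move=> ->; apply/midcondP; split => // [j Hj|]; last by rewrite addn0.
  split => // /andP[j0 _]; apply: sorted_pred => //; lia.
Qed.

Lemma mid_ge k v r m G : r < L -> MID k v r m G -> nth 0 k r <= nth 0 (head [::] G) r.
Proof. by move=> hr; case: G => // l G' /= /andP[/midcondP[_ H _] _]; have [_ h _] := H r hr; apply: h. Qed.

Lemma mid_true k v r m G : 0 < r < L -> size k = L ->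
  MID k v r m.+1 G && (nth 0 k r < nth 0 (head [::] G) r) = MID (incr_nth k r) v r m G.
Proof.
move=> hr hs; case: G => [|l G'] //=; rewrite andbAC; congr (_ && _).
apply/idP/idP.
- case/andP => /midcondP[hl H hsum] hlt; apply/midcondP; split => //.
  + move=> j Hj; have [h1 h2 h3] := H j Hj; rewrite !nth_incr_nth; split.
    * by move=> hrj; rewrite h1 // (_ : (r == j) = false) //; lia.
    * by move=> hjr; have [<-|hne] := eqVneq r j; [lia | have := h2 hjr; lia].
    * by move=> hj; rewrite (_ : (r == j.-1) = false); [apply: h3 | lia].
  + by rewrite sumn_incr_nth; lia.
- case/midcondP => hl H hsum; apply/andP; split; last first.
    by have [_ h2 _] := H r (andP hr).2; move: h2; rewrite nth_incr_nth eqxx; lia.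
  apply/midcondP; split => //; last by rewrite sumn_incr_nth in hsum; lia.
  move=> j Hj; have [h1 h2 h3] := H j Hj; move: h1 h2 h3; rewrite !nth_incr_nth => h1 h2 h3.
  split.
  * by move=> hrj; rewrite h1 // (_ : (r == j) = false) //; lia.
  * by move=> hjr; have := h2 hjr; lia.
  * by move=> hj; have := h3 hj; rewrite (_ : (r == j.-1) = false) //; lia.
Qed.

Lemma mid_true_sorted k v r m G : sorted geq k -> 0 < r < L -> size k = L ->
  MID k v r m G -> nth 0 k r < nth 0 (head [::] G) r -> sorted geq (incr_nth k r).
Proof.
move=> ks hr hs; case: G => [|l G'] //= /andP[/midcondP[hl H hsum] _] hlt.
apply: incr_sorted => //; first lia.
have [_ _ h3] := H r (andP hr).2; have : 0 < r <= r by lia. by move/h3; lia.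
Qed.

Lemma mid_false1 k v r m G : sorted geq k -> size k = L -> 0 < r -> r.+1 < L ->
  MID k v r.+1 m G && (nth 0 (head [::] G) r.+1 == nth 0 k r.+1) = MID k v r m G.
Proof.
move=> ks hs r0 hr; case: G => [|l G'] //=; rewrite andbAC; congr (_ && _).
apply/idP/idP.
- case/andP => /midcondP[hl H hsum] /eqP he; apply/midcondP; split => //.
  move=> j Hj; have [h1 h2 h3] := H j Hj; split.
  + by move=> hrj; have [<-|hne] := eqVneq r.+1 j; [|apply: h1; lia].
  + by move=> hjr; apply: h2; lia.
  + by move=> hj; apply: h3; lia.
- case/midcondP => hl H hsum; apply/andP; split; last first.
    by have [h1 _ _] := H r.+1 hr; rewrite h1.
  apply/midcondP; split => // j Hj; have [h1 h2 h3] := H j Hj; split.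
  + by move=> hrj; apply: h1; lia.
  + by move=> hjr; have [e|hne] := eqVneq r.+1 j; [subst j; rewrite h1 | apply: h2; lia].
  + move=> hj; have [e|hne] := eqVneq r.+1 j; last by apply: h3; lia.
    by subst j; rewrite h1 //; apply: sorted_pred => //; lia.
Qed.

Lemma mid_false0 k v m G : sorted geq k -> size k = L -> 1 < L ->
  MID k v 1 m G && (nth 0 (head [::] G) 1 == nth 0 k 1) =
  MID (set_nth 0 k 0 (nth 0 k 0 + m)) v 0 0 G.
Proof.
move=> ks hs hL; case: G => [|l G'] //=; rewrite andbAC; congr (_ && _).
rewrite midcond0 ?set0_sorted ?size_set_nth //; try lia.
apply/idP/eqP.
- case/andP => /midcondP[hl H hsum] /eqP he.
  have Hj : forall j, 0 < j -> nth 0 l j = nth 0 k j.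
    move=> j j0; have [hj|hj] := ltnP j L; last by rewrite !nth_default //; lia.
    by have [h1 _ _] := H j hj; have [<-|hne] := eqVneq 1 j; [|apply: h1; lia].
  have hl0 : nth 0 l 0 = nth 0 k 0 + m.
    have h1 : 0 < size l by lia.
    have h2 : 0 < size k by lia.
    have e1 := @sumn_set_nthS l 0 0 h1; have e2 := @sumn_set_nthS k 0 0 h2.
    have ee : set_nth 0 l 0 0 = set_nth 0 k 0 0.
      apply: (eq_from_nth (x0:=0)); rewrite !size_set_nth; first lia.
      by move=> j _; rewrite !nth_set_nth /=; case: j => // j; rewrite Hj.
    move: e1 e2; rewrite ee; lia.
  apply: (eq_from_nth (x0:=0)); rewrite ?size_set_nth; first lia.
  by move=> j _; rewrite nth_set_nth /=; case: j => [|j] //; rewrite Hj.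
- move=> ->; apply/andP; split; last by rewrite nth_set_nth.
  apply/midcondP; split; first by rewrite size_set_nth; lia.
  + move=> j Hj; rewrite !nth_set_nth /=; split; case: j Hj => [|[|j]] Hj //=; try lia.
    by move=> _; apply: sorted_pred => //; lia.
  + have h2 : 0 < size k by lia.
    have := @sumn_set_nthS k 0 (nth 0 k 0 + m) h2; lia.
Qed.

Lemma GT_next k v G : v.+1 < L -> GTrest k v.+1 G = MID k v.+1 v.+1 (nth 0 mu v.+1) G.
Proof.
move=> hv; case: G => [|l G'] /=; last by rewrite hv.
by rewrite (_ : (v.+1 == L) = false) //; lia.
Qed.

Lemma GT_last k v G : v.+1 = L -> GTrest k v.+1 G = (G == [::]) && Defs.eq_comp k tau.
Proof. by move=> hv; case: G => [|l G'] /=; rewrite hv ?eqxx ?ltnn. Qed.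

Lemma tree_main (mupos : all (fun x => 0 < x) mu) n : forall v, L - v <= n ->
  forall r m k, Inv k v r m -> Eqb (Term (Lab k (tv k v r m))) (MID k v r m).
Proof.
elim: n => [|n IHn] v hn r m k [hs ks hz hv [hr hm]]; first lia.
have m0 : forall r k, Inv k v r 0 -> Eqb (Term (Lab k (tv k v r 0))) (MID k v r 0).
  move=> r' k' [hs' ks' hz' _ [hr' _]].
  have Emid : MID k' v r' 0 =1
      (fun G => if G is l :: G' then (l == k') && GTrest k' v.+1 G' else false).
    by case => [|l G'] //=; rewrite midcond0 //; [case: eqP => [->|] | lia].
  have [hv1|hv1] := ltnP v.+1 L.
  - rewrite (tv_next _ hv1); last by apply: hz'.
    have mpos : 0 < nth 0 mu v.+1 by apply: (allP mupos); rewrite mem_nth.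
    have hn' : L - v.+1 <= n by lia.
    have IHv := IHn v.+1 hn' v.+1 (nth 0 mu v.+1) k'.
    have IH' : Eqb (Term (Lab k' (tv k' v.+1 v.+1 (nth 0 mu v.+1))))
                   (MID k' v.+1 v.+1 (nth 0 mu v.+1)).
      apply: IHv; split => //; try by split.
      by move=> j hj; apply: hz'; lia.
    apply: Eqb_ext (Eqb_cons k' IH') => // G.
    by rewrite Emid; case: G => //= l G'; rewrite GT_next.
  - have hvL : v.+1 = L by lia.
    have et : tv k' v r' 0 = k'.
      apply: (eq_from_nth (x0:=0)); rewrite size_tv ?hs' // => j hj.
      by rewrite nth_tv //; fin.
    rewrite et; apply: Eqb_ext (Eqb_single [::] [:: k'] (Defs.eq_comp k' tau)).
    + case => [|b p].
        by rewrite Term_nil FB_none ?andbb //= => c _; apply: leqnn.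
      by rewrite Term_cons FB_none // => c _; apply: leqnn.
    + by move=> G; rewrite Emid; case: G => //= l G'; rewrite GT_last // eqseq_cons andbA.
revert m k hr hm hs ks hz; elim: r => [|r IHr] m k hr hm hs ks hz.
  by case: m hm => [|m] hm; [apply: m0 | have := hm isT].
revert k hm hs ks hz; elim: m => [|m IHm] k hm hs ks hz; first by apply: m0.
have FB : first_bad L k (tv k v r.+1 m.+1) = Some r.+1.
  apply: FB_some; first lia.
    by move=> c hc; rewrite nth_tv; fin.
  by rewrite nth_tv; fin.
apply: (@Eqb_split _ _ (Term (child true r.+1 k (tv k v r.+1 m.+1)))
   (Term (child false r.+1 k (tv k v r.+1 m.+1))) _
   (fun G => MID k v r.+1 m.+1 G && (nth 0 k r.+1 < nth 0 (head [::] G) r.+1))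
   (fun G => MID k v r.+1 m.+1 G && (nth 0 (head [::] G) r.+1 == nth 0 k r.+1))).
- by rewrite Term_nil FB.
- by move=> p; rewrite Term_cons FB.
- by move=> p; rewrite Term_cons FB.
- move=> G; case E: (MID k v r.+1 m.+1 G) => //=.
  have := mid_ge (ltac:(lia) : r.+1 < L) E; rewrite leq_eqVlt => /orP[/eqP->|->] //.
  by rewrite eqxx orbT.
- by move=> G /andP[_ h1] /andP[_ /eqP h2]; lia.
- rewrite child_true_lab //; case: ifP => hsort.
    have hs' : size (incr_nth k r.+1) = L by rewrite size_incr_nth hs ifT //; lia.
    have hz' : forall j, v < j -> nth 0 (incr_nth k r.+1) j = 0.
      by move=> j hj; rewrite nth_incr_nth hz // (_ : (r.+1 == j) = false) //; lia.
    apply: Eqb_ext (IHm (incr_nth k r.+1) (fun _ => isT) hs' hsort hz') => //.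
    by move=> G; rewrite mid_true //; lia.
  apply: (Eqb_pred0' [::] [::]) => [p|G]; first by rewrite Term_empty.
  apply/negbTE/negP => /andP[hM hlt].
  by move: hsort; rewrite (mid_true_sorted ks _ hs hM hlt) //; lia.
- clear IHm; case: r IHr hr hm FB => [|r] IHr hr hm FB.
    rewrite child_false_lab0 //; try lia.
    apply: Eqb_ext (IHr 0 _ _ _ _ _ _) => //.
    + by move=> G; rewrite mid_false0 //; lia.
    + by rewrite size_set_nth hs; lia.
    + by apply: set0_sorted => //; lia.
    + by move=> j hj; rewrite nth_set_nth /= ifF ?hz //; lia.
  rewrite child_false_lab1 //; try lia.
  apply: Eqb_ext (IHr m.+1 k _ _ hs ks hz) => //; try lia.
  by move=> G; rewrite mid_false1 //; lia.
Qed.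

End Tree.

Definition cnt (w : nat) (s : seq nat) := count (fun x => x <= w) s.

Lemma cntS w s : cnt w.+1 s = cnt w s + count_mem w.+1 s.
Proof. rewrite /cnt; elim: s => //= x s ->; case: (ltngtP x w.+1) => h; lia. Qed.

Lemma cnt0 s : cnt 0 s = count_mem 0 s.
Proof. by rewrite /cnt; apply: eq_count => x /=; rewrite leqn0. Qed.

Lemma cnt_mono w w' s : w <= w' -> cnt w s <= cnt w' s.
Proof. by move=> h; apply: sub_count => x /= hx; apply: leq_trans h. Qed.

Lemma cnt_zero w s : (forall x, x \in s -> w < x) -> cnt w s = 0.
Proof.
move=> H; apply/eqP; rewrite -leqn0 leqNgt -has_count; apply/hasPn => x /H /=; lia.
Qed.

Lemma cnt_all w s : (forall x, x \in s -> x <= w) -> cnt w s = size s.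
Proof. by move=> H; apply/eqP; rewrite -all_count; apply/allP. Qed.

Lemma K1 s w p : sorted leq s -> (p < cnt w s) = (p < size s) && (nth 0 s p <= w).
Proof.
rewrite /cnt; elim: s p => [|x s IH] p //= hs.
have hs' := path_sorted hs; have hmin := order_path_min leq_trans hs.
case: (leqP x w) => hx /=.
  by case: p => [|p] //=; rewrite add1n !ltnS IH.
have -> : count (fun x => x <= w) s = 0.
  apply/eqP; rewrite -leqn0 leqNgt -has_count; apply/hasPn => y hy /=.
  by have := allP hmin y hy; lia.
case: p => [|p] /=; first by lia.
case: (ltnP p (size s)) => hp //=.
have h := allP hmin _ (mem_nth 0 hp); rewrite addn0 ltnS hp /=; apply/esym/negbTE; rewrite -ltnNge; move: h; rewrite /=; lia.
by rewrite addn0 ltnS; apply/esym/andP => -[h _]; lia. Qed.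

Lemma I1 (a b : seq nat) w : sorted leq a -> sorted leq b -> size b <= size a ->
  (forall p, p < size b -> nth 0 a p < nth 0 b p) -> cnt w.+1 b <= cnt w a.
Proof.
move=> sa sb hsz H; case E: (cnt w.+1 b) => [|k] //.
have : k < cnt w.+1 b by rewrite E.
rewrite K1 // => /andP[hk hb]; have := H k hk => hab.
have : k < cnt w a by rewrite K1 //; apply/andP; split; lia.
by [].
Qed.

Lemma I2 (a b : seq nat) : sorted leq a -> sorted leq b ->
  (forall w, cnt w.+1 b <= cnt w a) -> (forall x, x \in b -> 0 < x) ->
  forall p, p < size b -> p < size a /\ nth 0 a p < nth 0 b p.
Proof.
move=> sa sb H hpos p hp.
have hx := hpos _ (mem_nth 0 hp).
have : p < cnt (nth 0 b p) b by rewrite K1 // hp leqnn.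
rewrite -(prednK hx) => h1; have := leq_trans h1 (H _).
by rewrite K1 // => /andP[-> h2]; split => //; lia.
Qed.

Lemma sumn_mkseqS f n : sumn (mkseq f n.+1) = sumn (mkseq f n) + f n.
Proof. by rewrite /mkseq -addn1 iotaD map_cat sumn_cat /= addn0. Qed.

Lemma sumn_mkseq_pick f c n :
  sumn (mkseq (fun i => (i == c) * f i) n) = if c < n then f c else 0.
Proof.
elim: n => [|n IH] //; rewrite sumn_mkseqS IH.
have [->|hne] := eqVneq n c; first by rewrite ltnn ltnSn mul1n.
rewrite mul0n addn0; case: (ltnP c n) => h; first by rewrite ifT //; lia.
by rewrite ifF //; move: hne => /eqP; lia.
Qed.

Lemma sumn_mkseq_sub f g n : (forall j, j < n -> g j <= f j) ->
  sumn (mkseq (fun j => f j - g j) n) = sumn (mkseq f n) - sumn (mkseq g n).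
Proof.
elim: n => [|n IH] // H; rewrite !sumn_mkseqS IH; last by move=> j hj; apply: H; lia.
have h1 := H n (ltnSn n).
have : sumn (mkseq g n) <= sumn (mkseq f n).
  clear IH; elim: n H {h1} => [|n IH] H //; rewrite !sumn_mkseqS.
  have := H n (ltnW (ltnSn n.+1)); have := IH (fun j hj => H j (ltnW hj)); lia.
lia.
Qed.

Lemma sumn_mkseq_trunc f n m : n <= m -> (forall j, n <= j -> f j = 0) ->
  sumn (mkseq f m) = sumn (mkseq f n).
Proof.
move=> hnm H; elim: m hnm => [|m IH] hnm; first by have -> : n = 0 by lia.
case: (ltngtP n m.+1) => h; [|lia|by rewrite h].
by rewrite sumn_mkseqS IH ?H //; lia.
Qed.

Lemma sumn_mkseq_nth (s : seq nat) : sumn s = sumn (mkseq (nth 0 s) (size s)).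
Proof. by rewrite mkseq_nth. Qed.

Lemma sumn_mkseq_map (T : Type) (x0 : T) (f : T -> nat) (s : seq T) n :
  size s <= n -> f x0 = 0 -> sumn (mkseq (fun j => f (nth x0 s j)) n) = sumn (map f s).
Proof.
move=> hn hf; rewrite (sumn_mkseq_trunc hn); last by move=> j hj; rewrite nth_default.
have -> : map f s = map f (mkseq (nth x0 s) (size s)) by rewrite mkseq_nth.
by rewrite /mkseq -map_comp.
Qed.

Lemma eq_compP (a b : seq nat) : reflect (forall i, nth 0 a i = nth 0 b i) (Defs.eq_comp a b).
Proof.
apply: (iffP allP) => H.
  move=> i; case: (ltnP i (maxn (size a) (size b))) => hi.
    by apply/eqP/H; rewrite mem_iota.
  by rewrite !nth_default //; lia.
by move=> i _; rewrite H.
Qed.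

Lemma size_le_sumn (s : seq nat) : all (fun x => 0 < x) s -> size s <= sumn s.
Proof. elim: s => //= x s IH /andP[hx hs]; have := IH hs; lia. Qed.

Section Tab.
Variables (mu tau : seq nat).
Local Notation L := (size mu).
Hypotheses (mupos : all (fun x => 0 < x) mu) (taupos : all (fun x => 0 < x) tau)
  (tausort : sorted geq tau) (Lpos : 0 < L).

Definition k0 := nth 0 mu 0 :: nseq L.-1 0.

Lemma size_k0 : size k0 = L.
Proof. by rewrite /= size_nseq; lia. Qed.

Lemma nth_k0 j : nth 0 k0 j = if j == 0 then nth 0 mu 0 else 0.
Proof. by case: j => //= j; rewrite nth_nseq if_same. Qed.

Lemma sorted_k0 : sorted geq k0.
Proof.
apply/sorted_geqP => i _; rewrite !nth_k0; case: i => //=.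
Qed.

Definition GTok G := [/\ size G = L, nth [::] G 0 = k0,
  (forall v, 0 < v < L -> midcond mu (nth [::] G v.-1) v (nth 0 mu v) (nth [::] G v))
  & Defs.eq_comp (nth [::] G L.-1) tau].

Lemma GTrestP k w G : GTrest mu tau k w G =
  [&& w + size G == L,
      all (fun i => midcond mu (nth [::] (k :: G) i) (w + i) (nth 0 mu (w + i)) (nth [::] G i))
          (iota 0 (size G))
    & Defs.eq_comp (last k G) tau].
Proof.
elim: G k w => [|l G IH] k w /=; first by rewrite addn0.
rewrite IH addn0 (iotaDl 1 0) all_map -addSnnS.
have -> : all (preim (addn 1) (fun i => midcond mu (nth [::] (k :: l :: G) i) (w + i)
              (nth 0 mu (w + i)) (nth [::] (l :: G) i))) (iota 0 (size G)) =
          all (fun i => midcond mu (nth [::] (l :: G) i) (w.+1 + i) (nth 0 mu (w.+1 + i))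
              (nth [::] G i)) (iota 0 (size G)).
  by apply: eq_all => i /=; rewrite add1n addnS addSn.
have [h|h] := boolP (w.+1 + size G == L).
  by rewrite (_ : (w < L) = true) /= ?andbA //; lia.
by rewrite /= !andbF.
Qed.

Lemma MID0P G : MID mu tau k0 0 0 0 G <-> GTok G.
Proof.
split.
- case: G => [|l G'] //= /andP[]; rewrite midcond0 ?sorted_k0 ?size_k0 // => /eqP -> .
  rewrite GTrestP => /and3P[/eqP hs /allP ha he].
  have e1 : size (k0 :: G') = L by rewrite /= -hs.
  have e2 : forall v, 0 < v < L ->
     midcond mu (nth [::] (k0 :: G') v.-1) v (nth 0 mu v) (nth [::] (k0 :: G') v).
    case=> // v /andP[_ vL]; have := ha v; rewrite mem_iota add1n /=.
    by apply; lia.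
  have e3 : Defs.eq_comp (nth [::] (k0 :: G') L.-1) tau by rewrite -hs /= -last_nth.
  by split.
- case=> hs h0 hm he; case: G hs h0 hm he => [|l G'] //=.
  move=> [hs] -> hm he; rewrite midcond0 ?sorted_k0 ?size_k0 // eqxx /=.
  rewrite GTrestP; apply/and3P; split; first by apply/eqP; lia.
  + apply/allP => i; rewrite mem_iota => hi; have := hm i.+1; rewrite add1n /=.
    by apply; lia.
  + by rewrite (last_nth [::]); move: he; rewrite -hs.
Qed.

Section GTfacts.
Variable G : seq (seq nat).
Hypothesis hG : GTok G.

Definition shp e j := if e is v.+1 then nth 0 (nth [::] G v) j else 0.

Lemma GT_size v : v < L -> size (nth [::] G v) = L.
Proof.
case: hG => _ h0 hm _; case: v => [|v] hv; first by rewrite h0 size_k0.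
by have /midcondP[] := hm v.+1 (ltac:(lia)).
Qed.

Lemma shp_default e j : L <= j -> shp e j = 0.
Proof.
case: e => [|v] //= hj; case: (ltnP v L) => hv; first by rewrite nth_default // GT_size.
by rewrite (nth_default [::]) ?nth_nil //; case: hG => ->.
Qed.

Lemma shp_mono1 e j : e < L -> shp e j <= shp e.+1 j.
Proof.
move=> he; case: (ltnP j L) => hj; last by rewrite !shp_default.
case: e he => [|v] hv //=.
case: hG => _ _ hm _; have /midcondP[_ H _] := hm v.+1 (ltac:(lia)).
have [h1 h2 _] := H j hj; case: (leqP j v.+1) => hjv; first by apply: h2.
by rewrite h1.
Qed.

Lemma shp_mono e e' j : e <= e' -> e' <= L -> shp e j <= shp e' j.
Proof.
move=> h1 h2; elim: e' h1 h2 => [|e' IH] h1 h2; first by have -> : e = 0 by lia.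
case: (ltngtP e e'.+1) => h; [|lia| by rewrite h].
by apply: leq_trans (IH _ _) (shp_mono1 _ _); lia.
Qed.

Lemma shp_zero e j : e <= L -> e <= j -> shp e j = 0.
Proof.
elim: e j => [|e IH] j he hj //.
case: e IH he hj => [|v] IH he hj /=.
  by case: hG => _ -> _ _; rewrite nth_k0 ifF //; lia.
case: (ltnP j L) => hjL; last by rewrite nth_default ?GT_size //; lia.
case: hG => _ _ hm _; have /midcondP[_ H _] := hm v.+1 (ltac:(lia)).
have [h1 _ _] := H j hjL; rewrite h1; last by lia.
by have := IH j (ltac:(lia)) (ltac:(lia)).
Qed.

Lemma shp_inter e j : e < L -> 0 < j -> shp e.+1 j <= shp e j.-1.
Proof.
move=> he hj; case: (leqP e.+1 j) => hej; first by rewrite shp_zero //; lia.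
case: e he hej => [|v] he hej /=.
  by case: hG => _ -> _ _; rewrite nth_k0 ifF //; lia.
case: (ltnP j L) => hjL; last by rewrite -[nth 0 _ j]/(shp v.+2 j) shp_default.
case: hG => _ _ hm _; have /midcondP[_ H _] := hm v.+1 (ltac:(lia)).
by have [_ _ h3] := H j hjL; apply: h3; lia.
Qed.

Lemma shp_L j : shp L j = nth 0 tau j.
Proof.
case: hG => _ _ _ /eq_compP he; rewrite -he.
by case: L Lpos => // n _.
Qed.

Lemma size_tau_L : size tau <= L.
Proof.
case: (leqP (size tau) L) => // h.
have := allP taupos _ (mem_nth 0 (ltac:(lia) : L < size tau)).
by rewrite -shp_L shp_zero.
Qed.

Lemma shp_tau e j : e <= L -> size tau <= j -> shp e j = 0.
Proof.
move=> he hj; have := shp_mono j he (leqnn L); rewrite shp_L nth_default //; lia.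
Qed.

Definition Ssum e := sumn (mkseq (shp e) L).

Lemma Ssum_step e : 0 < e <= L -> Ssum e = Ssum e.-1 + nth 0 mu e.-1.
Proof.
case: e => [|e] // /andP[_ he]; rewrite /Ssum /=.
have -> : mkseq (shp e.+1) L = nth [::] G e.
  apply: (eq_from_nth (x0:=0)); rewrite size_mkseq ?GT_size // => j hj.
  by rewrite nth_mkseq.
case: e he => [|v] he /=.
  case: hG => _ -> _ _; rewrite /= sumn_nseq mul0n addn0.
  by rewrite (sumn_mkseq_trunc (n:=0)).
have -> : mkseq (shp v.+1) L = nth [::] G v.
  have hv : v < L by lia.
  apply: (eq_from_nth (x0:=0)); rewrite size_mkseq ?GT_size // => j hj.
  by rewrite nth_mkseq.
case: hG => _ _ hm _; have /midcondP[_ _ ->] := hm v.+1 (ltac:(lia)).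
by [].
Qed.

End GTfacts.

Definition flat G j := flatten (mkseq (fun i => nseq (shp G i.+1 j - shp G i j) i.+1) L).
Definition rowD G j := sort leq (flat G j).
Definition Del G := mkseq (rowD G) (size tau).

Lemma count_flat G x j : count_mem x (flat G j) =
  if 0 < x <= L then shp G x j - shp G x.-1 j else 0.
Proof.
rewrite /flat count_flatten /mkseq -map_comp.
case: x => [|x] /=.
  rewrite (_ : map _ _ = mkseq (fun i => (i == L) * 0) L) ?sumn_mkseq_pick ?ltnn //.
  by apply: eq_map => i /=; rewrite count_nseq /= muln0.
rewrite (_ : map _ _ = mkseq (fun i => (i == x) * (shp G i.+1 j - shp G i j)) L).
  by rewrite sumn_mkseq_pick.
by apply: eq_map => i /=; rewrite count_nseq /= eqSS.
Qed.

Lemma cnt_flat G (hG : GTok G) w j : cnt w (flat G j) = shp G (minn w L) j.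
Proof.
elim: w => [|w IH]; first by rewrite cnt0 count_flat /= (_ : minn 0 L = 0) //; lia.
rewrite cntS IH count_flat.
case: (leqP w.+1 L) => hw.
  rewrite /= (_ : minn w L = w); last lia.
  rewrite -/(shp G w.+1 j); have := shp_mono1 hG j (ltac:(lia) : w < L); lia.
by rewrite /= ?addn0 (_ : minn w L = L) //; lia.
Qed.

Lemma mem_flat G j x : x \in flat G j -> 0 < x <= L.
Proof.
rewrite -has_pred1 has_count count_flat; case: ifP => // h _; exact: h.
Qed.

Lemma perm_rowD G j : perm_eq (rowD G j) (flat G j).
Proof. by rewrite /rowD perm_sort perm_refl. Qed.

Lemma count_rowD G j (a : pred nat) : count a (rowD G j) = count a (flat G j).
Proof. exact: (permP (perm_rowD G j)). Qed.

Lemma mem_rowD G j x : (x \in rowD G j) = (x \in flat G j).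
Proof. exact: (perm_mem (perm_rowD G j)). Qed.

Lemma size_rowD G (hG : GTok G) j : size (rowD G j) = nth 0 tau j.
Proof.
rewrite size_sort -(cnt_all (w := L)); last by move=> x /mem_flat; lia.
by rewrite cnt_flat // minnn shp_L.
Qed.

Lemma Del_ssyt G : GTok G -> is_ssyt tau mu (Del G).
Proof.
move=> hG; apply/and4P; split.
- apply/eqP/(eq_from_nth (x0:=0)); rewrite size_map size_mkseq // => j hj.
  by rewrite (nth_map [::]) ?size_mkseq // nth_mkseq // size_rowD.
- by apply/allP => r /mapP[j _ ->]; rewrite /rowD; apply: sort_sorted; exact: leq_total.
- apply/allP => i; rewrite size_mkseq mem_iota /= => hi; apply/allP => p; rewrite mem_iota /=.
  case: (ltnP i.+1 (size tau)) => hi1; last by rewrite nth_default ?size_mkseq.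
  rewrite !nth_mkseq // => hp.
  have sa : sorted leq (rowD G i) by apply: sort_sorted; exact: leq_total.
  have sb : sorted leq (rowD G i.+1) by apply: sort_sorted; exact: leq_total.
  have hpos : forall x, x \in rowD G i.+1 -> 0 < x by move=> x; rewrite mem_rowD => /mem_flat; lia.
  have hc : forall w, cnt w.+1 (rowD G i.+1) <= cnt w (rowD G i).
    move=> w; rewrite /cnt !count_rowD -!/(cnt _ _) !cnt_flat //.
    case: (leqP w.+1 L) => hw.
      rewrite (_ : minn w L = w) ?(_ : minn w.+1 L = w.+1); try lia.
      by apply: shp_inter => //; lia.
    rewrite (_ : minn w L = L) ?(_ : minn w.+1 L = L); try lia.
    have h1 := shp_inter hG (ltac:(lia) : L.-1 < L) (ltac:(lia) : 0 < i.+1).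
    rewrite prednK // in h1; apply: leq_trans h1 _; apply: shp_mono => //; lia.
  by have [_ ->] := I2 sa sb hc hpos hp.
- apply/allP => x _; apply/eqP.
  rewrite count_flatten /Del /mkseq -map_comp.
  rewrite (_ : map _ _ = mkseq (fun j => if 0 < x <= L then shp G x j - shp G x.-1 j else 0)
                           (size tau)); last first.
    by apply: eq_map => j /=; rewrite count_rowD count_flat.
  case hx: (0 < x <= L).
    rewrite sumn_mkseq_sub; last by move=> j _; apply: shp_mono => //; lia.
    have e1 : forall e, e <= L -> sumn (mkseq (fun j => shp G e j) (size tau)) = Ssum G e.
      move=> e he; rewrite /Ssum (sumn_mkseq_trunc (n := size tau) (size_tau_L hG)) //.
      by move=> j hj; apply: shp_tau.
    rewrite !e1; try lia.
    rewrite (Ssum_step hG (ltac:(lia) : 0 < x <= L)).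
    by case: x hx => // x _; rewrite addKn.
  rewrite (sumn_mkseq_trunc (n:=0)) //.
  case: x hx => [|x] hx //=; rewrite nth_default //; lia.
Qed.

Definition wt x := if x is k.+1 then nth 0 mu k else 0.

Definition Gam (T : seq (seq nat)) :=
  mkseq (fun v => mkseq (fun j => cnt v.+1 (nth [::] T j)) L) L.

Section SS.
Variable T : seq (seq nat).
Hypothesis hT : is_ssyt tau mu T.

Lemma ss_shape : map size T = tau.
Proof. by case/and4P: hT => /eqP. Qed.

Lemma ss_sorted j : sorted leq (nth [::] T j).
Proof.
case/and4P: hT => _ /allP hs _ _; case: (ltnP j (size T)) => hj.
  by apply: hs; rewrite mem_nth.
by rewrite nth_default.
Qed.

Lemma ss_col i p : p < size (nth [::] T i.+1) ->
  nth 0 (nth [::] T i) p < nth 0 (nth [::] T i.+1) p.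
Proof.
case/and4P: hT => _ _ /allP hc _; case: (ltnP i (size T)) => hi.
  have := hc i; rewrite mem_iota /= => /(_ hi) /allP H hp.
  by have := H p; rewrite mem_iota /= => /(_ hp).
by rewrite (nth_default [::] (_ : size T <= i.+1)) //; lia.
Qed.

Lemma ss_wt x : count_mem x (flatten T) = wt x.
Proof.
case/and4P: hT => _ _ _ /allP hw.
case: (boolP (x \in flatten T)) => hx.
  by apply/eqP/hw; rewrite mem_cat hx orbT.
case: (leqP x (sumn mu)) => hxs.
  by apply/eqP/hw; rewrite mem_cat mem_iota /=; apply/orP; left; lia.
have -> : count_mem x (flatten T) = 0.
  by apply/eqP; rewrite -leqn0 leqNgt -has_count has_pred1.
case: x {hx} hxs => [|k] hk //=; rewrite nth_default //.
have := size_le_sumn mupos; lia.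
Qed.

Lemma ss_size_row j : size (nth [::] T j) = nth 0 tau j.
Proof.
rewrite -ss_shape; case: (ltnP j (size T)) => hj; first by rewrite (nth_map [::]).
by rewrite !nth_default ?size_map.
Qed.

Lemma ss_row_le j : size (nth [::] T j.+1) <= size (nth [::] T j).
Proof.
rewrite !ss_size_row; case: (ltnP j.+1 (size tau)) => hj.
  exact: (sorted_geqP _ tausort).
by rewrite (nth_default 0 hj).
Qed.

Lemma ss_ent j x : x \in nth [::] T j -> 0 < x <= L.
Proof.
move=> hx; case: (ltnP j (size T)) => hj; last by rewrite nth_default in hx.
have hf : x \in flatten T by apply/flattenP; exists (nth [::] T j) => //; rewrite mem_nth.
have : 0 < count_mem x (flatten T) by rewrite -has_count has_pred1.
rewrite ss_wt; case: x {hx hf} => [|k] //= hk.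
by case: (ltnP k L) => hkL; [lia | rewrite nth_default in hk].
Qed.

Lemma ss_E1 j x : x \in nth [::] T j -> j < x.
Proof.
elim: j x => [|j IH] x hx; first by have := ss_ent hx; lia.
case/(nthP 0): hx => p hp <-.
have hp' : p < size (nth [::] T j) by exact: leq_trans hp (ss_row_le j).
exact: leq_ltn_trans (IH _ (mem_nth 0 hp')) (ss_col hp).
Qed.

Lemma ss_size_T : size T <= L.
Proof.
case: (leqP (size T) L) => // h.
have hs : 0 < size (nth [::] T L).
  rewrite ss_size_row; apply: (allP taupos); rewrite mem_nth // -ss_shape size_map //.
have := ss_E1 (mem_nth 0 hs); have := ss_ent (mem_nth 0 hs); lia.
Qed.

Lemma shp_Gam e j : e <= L -> shp (Gam T) e j = cnt e (nth [::] T j).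
Proof.
case: e => [|v] he /=.
  by rewrite cnt_zero // => x /ss_ent; lia.
rewrite nth_mkseq //; case: (ltnP j L) => hj; first by rewrite nth_mkseq.
rewrite nth_default ?size_mkseq // (nth_default [::]) //.
by have := ss_size_T; lia.
Qed.

Lemma sum_Gam v : v < L -> sumn (nth [::] (Gam T) v) = cnt v.+1 (flatten T).
Proof.
move=> hv; rewrite nth_mkseq // (sumn_mkseq_map (x0:=[::]) (f:=cnt v.+1)) //; last exact: ss_size_T.
by rewrite /cnt count_flatten.
Qed.

Lemma cnt_flatT w : cnt w.+1 (flatten T) = cnt w (flatten T) + nth 0 mu w.
Proof. by rewrite cntS ss_wt. Qed.

Lemma cnt0_flatT : cnt 0 (flatten T) = 0.
Proof. by rewrite cnt0 ss_wt. Qed.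

Lemma Gam_ok : GTok (Gam T).
Proof.
split; first by rewrite size_mkseq.
- apply: (eq_from_nth (x0:=0)); rewrite ?size_k0 nth_mkseq ?size_mkseq // => j hj.
  rewrite nth_mkseq // nth_k0; case: j hj => [|j] hj /=; last first.
    by rewrite cnt_zero // => x /ss_E1; lia.
  have := sum_Gam Lpos; rewrite cnt_flatT cnt0_flatT add0n nth_mkseq // => <-.
  rewrite (sumn_mkseq_trunc (n := 1)) //= ?addn0 //.
  by case=> // j _; rewrite cnt_zero // => x /ss_E1; lia.
- case=> // v /andP[_ hv]; apply/midcondP; split; first by rewrite nth_mkseq ?size_mkseq //.
    move=> j hj; rewrite /= !nth_mkseq //; try lia.
    split.
    + move=> hvj; rewrite !cnt_zero // => x /ss_E1; lia.
    + by move=> _; apply: cnt_mono.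
    + case: j hj => // j hj /andP[_ hjv] /=.
      apply: I1; [exact: ss_sorted | exact: ss_sorted | exact: ss_row_le | ].
      by move=> p hp; apply: ss_col.
  by rewrite /= sum_Gam // sum_Gam //; [rewrite cnt_flatT | lia].
- apply/eq_compP => i; case: (ltnP i L) => hi.
    rewrite nth_mkseq ?prednK // ?nth_mkseq //; try lia.
    rewrite cnt_all ?ss_size_row // => x /ss_ent; lia.
  rewrite (nth_default 0 (s := nth [::] (Gam T) L.-1)); last first.
    by rewrite nth_mkseq ?size_mkseq; lia.
  by rewrite nth_default //; have := ss_size_T; rewrite -ss_shape size_map; lia.
Qed.

Lemma Del_Gam : Del (Gam T) = T.
Proof.
have hsz : size tau = size T by rewrite -ss_shape size_map.
apply: (eq_from_nth (x0:=[::])); rewrite size_mkseq // => j hj.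
rewrite nth_mkseq //; apply: (sorted_eq leq_trans anti_leq).
- by apply: sort_sorted; exact: leq_total.
- exact: ss_sorted.
rewrite /rowD perm_sort; apply/allP => x _; apply/eqP.
rewrite count_flat; case hx: (0 < x <= L).
  rewrite !shp_Gam; try lia.
  by case: x hx => // x _; rewrite cntS addKn.
apply/esym/eqP; rewrite -leqn0 leqNgt -has_count has_pred1; apply/negP => /ss_ent.
by rewrite hx.
Qed.

End SS.

Lemma Gam_Del G : GTok G -> Gam (Del G) = G.
Proof.
move=> hG; have [hs _ _ _] := hG.
apply: (eq_from_nth (x0:=[::])); rewrite size_mkseq // => v hv.
rewrite nth_mkseq //; apply: (eq_from_nth (x0:=0)); rewrite size_mkseq ?GT_size // => j hj.
rewrite nth_mkseq //; case: (ltnP j (size tau)) => hjt.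
  rewrite nth_mkseq // /cnt count_rowD -/(cnt _ _) cnt_flat // (_ : minn v.+1 L = v.+1) //.
  lia.
rewrite nth_default ?size_mkseq //.
rewrite -/(shp G v.+1 j) shp_tau //.
Qed.

Lemma tab_eqb : Eqb (is_ssyt tau mu) (MID mu tau k0 0 0 0).
Proof.
exists Gam, Del; split.
- by move=> T hT; apply/MID0P/Gam_ok.
- by move=> G /MID0P hG; apply: Del_ssyt.
- by move=> T hT; apply: Del_Gam.
- by move=> G /MID0P hG; apply: Gam_Del.
Qed.

End Tab.

Lemma tree_root (mu tau : seq nat) : all (fun x => 0 < x) mu -> 0 < size mu ->
  Eqb (terminal_tt mu tau) (MID mu tau (k0 mu) 0 0 0).
Proof.
move=> mup Lpos.
have hinv : Inv mu (k0 mu) 0 0 0.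
  split; [by rewrite /k0 /= size_nseq; lia | exact: sorted_k0 | | by [] | by []].
  by move=> j hj; rewrite nth_k0 ifF //; lia.
have := tree_main tau mup (leqnn (size mu - 0)) hinv.
have -> : tv mu (k0 mu) 0 0 0 = mu.
  apply: (eq_from_nth (x0:=0)); rewrite size_tv // => j hj.
  rewrite nth_tv // nth_k0; case: j hj => [|j] hj /=; by rewrite ?muln0 ?addn0.
apply: Eqb_ext => // p.
Qed.

Unset Implicit Arguments.
Theorem lemma6p18 (s : nat) (mu tau : seq nat) :
  partition_of s mu -> partition_of s tau ->
  exists f : terminal_vertex mu tau -> SStd tau mu, bijective f.
Proof.
move=> /and3P[mus mup /eqP mum] /and3P[taus taup /eqP taum].
apply: Eqb_sig.
case: (posnP (size mu)) => hL.
  have mu0 : mu = [::] by apply/eqP; rewrite -size_eq0 hL.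
  have tau0 : tau = [::].
    apply/eqP; rewrite -size_eq0 -leqn0; have := size_le_sumn taup; rewrite taum -mum mu0 //.
  subst mu tau.
  apply: Eqb_ext (Eqb_single [::] [::] true).
    by case.
  by case => [|r T].
apply: Eqb_trans (tree_root tau mup hL) (Eqb_sym (tab_eqb mup taup taus hL)).
Qed.
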